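(* Let $G$ be a finite group and let $C(G)^*$ denote the set of non-trivial cyclic subgroups of $G$. Suppose that at least one of the following conditions holds: (a) $m_G(H_1)=m_G(H_2)=m^*(G)$ for all $H_1,H_2\in C(G)^*$; (b) $m_G(H_1)=m_G(H_2)$ for all non-trivial abelian subgroups $H_1,H_2$ of $G$. Then either $G\cong C_p$ for some prime $p$, or $G\cong Q_8$ (the quaternion group of order $8$).
   Context: For a finite group $G$ and a subgroup $H\leq G$, the Chermak-Delgado measure of $H$ in $G$ is $m_G(H)=|H|\,|C_G(H)|$, where $C_G(H)$ is the centralizer of $H$ in $G$. Also $m^*(G)=\max\{m_G(H)\mid H\leq G\}$. *)

(* Defs.v *)
From mathcomp Require Import all_boot all_fingroup all_solvable zmodp.
Set Implicit Arguments. Unset Strict Implicit. Unset Printing Implicit Defensive.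
Local Open Scope group_scope.

(* Chermak-Delgado measure m_G(H) = |H| * |C_G(H)| *)
Definition cdm (gT : finGroupType) (G H : {set gT}) : nat := #|H| * #|'C_G(H)|.

Definition mstar (gT : finGroupType) (G : {group gT}) : nat :=
  \max_(H : {group gT} | H \subset G) cdm G H.

Definition nt_cyclic_sub (gT : finGroupType) (G H : {group gT}) : bool :=
  [&& H \subset G, cyclic H & H != 1%G].

Definition nt_abelian_sub (gT : finGroupType) (G H : {group gT}) : bool :=
  [&& H \subset G, abelian H & H != 1%G].

(* Main.v *)
Require Import Defs.
From mathcomp Require Import all_boot all_fingroup all_solvable zmodp zify.
Set Implicit Arguments. Unset Strict Implicit. Unset Printing Implicit Defensive.
Local Open Scope group_scope.
Lemma key_pgroup (gT : finGroupType) (G : {group gT}) M :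
  (forall x, x \in G -> x != 1 -> (#[x] * #|'C_G[x]|)%N = M) ->
  G :!=: 1 -> {p | prime p & p.-group G}.
Proof.
move=> HM ntG.
have logM q : prime q -> q %| #|G| -> logn q #|G| < logn q M.
  move=> q_pr qG.
  have [S sylS] := Sylow_exists q G.
  have sSG := pHall_sub sylS; have qS := pHall_pgroup sylS.
  have oS := card_Hall sylS.
  have ntS : S :!=: 1.
    by rewrite -cardG_gt1 oS p_part_gt1 mem_primes q_pr cardG_gt0.
  have ntZS : 'Z(S) :!=: 1.
    by apply: contra ntS => /eqP/(trivg_center_pgroup qS) ->.
  have [_ qZ _] := pgroup_pdiv (pgroupS (center_sub S) qS) ntZS.
  have [x Zx ox] := Cauchy q_pr qZ.
  have Sx : x \in S := subsetP (center_sub S) x Zx.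
  have Gx : x \in G := subsetP sSG x Sx.
  have ntx : x != 1 by rewrite -order_gt1 ox prime_gt1.
  have sSC : S \subset 'C_G[x].
    rewrite subsetI sSG sub_cent1.
    by move: Zx; rewrite inE => /andP[].
  have := HM x Gx ntx; rewrite ox => <-.
  rewrite lognM ?cardG_gt0 ?prime_gt0 // (logn_prime q q_pr) eqxx add1n ltnS.
  rewrite -logn_part -oS dvdn_leq_log ?cardG_gt0 //.
  exact: cardSg.
have G1 : 1 < #|G| by rewrite cardG_gt1.
set p := pdiv #|G|.
have p_pr : prime p by apply: pdiv_prime.
have pdG : p %| #|G| := pdiv_dvd _.
exists p => //.
apply/pnatP; first exact: cardG_gt0.
move=> q q_pr qG; rewrite inE /=.
apply: contraT => nqp.
have [y Gy oy] := Cauchy q_pr qG.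
have nty : y != 1 by rewrite -order_gt1 oy prime_gt1.
have := logM p p_pr pdG; rewrite -(HM y Gy nty) oy.
rewrite lognM ?cardG_gt0 ?prime_gt0 // (logn_prime p q_pr).
rewrite eq_sym (negPf nqp) add0n ltnNge dvdn_leq_log ?cardG_gt0 //.
exact: cardSg (subsetIl _ _).
Qed.
Lemma key_class (gT : finGroupType) (G : {group gT}) M p :
  (forall x, x \in G -> x != 1 -> (#[x] * #|'C_G[x]|)%N = M) ->
  (forall x, x \in G -> x != 1 -> 'Z(G) \subset <[x]>) ->
  G :!=: 1 -> prime p -> p.-group G ->
  (exists2 p : nat, prime p & G \isog Zp p) \/ G \isog 'Q_8.
Proof.
move=> HM HZ ntG p_pr pG.
have ntZ : 'Z(G) :!=: 1.
  by apply: contra ntG => /eqP/(trivg_center_pgroup pG) ->.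
have [_ pZ _] := pgroup_pdiv (pgroupS (center_sub G) pG) ntZ.
have [z Zz oz] := Cauchy p_pr pZ.
have Gz : z \in G := subsetP (center_sub G) z Zz.
have ntz : z != 1 by rewrite -order_gt1 oz prime_gt1.
have defZ : 'Z(G) :=: <[z]>.
  by apply/eqP; rewrite eqEsubset HZ // cycle_subG.
have oZ : #|'Z(G)| = p by rewrite defZ -orderE.
have CGz : 'C_G[z] = G.
  apply/setIidPl; rewrite sub_cent1.
  by move: Zz; rewrite inE => /andP[].
have hM : M = (p * #|G|)%N by rewrite -(HM z Gz ntz) oz CGz.
have oOhm : #|'Ohm_1(G)| = p.
  have sOZ : 'Ohm_1(G) \subset 'Z(G).
    rewrite (OhmE 1 pG) gen_subG; apply/subsetP => y /setIdP[Gy]; rewrite expn1 => yp.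
    have [-> | nty] := eqVneq y 1; first exact: group1.
    have oy : #[y] = p.
      have ny1 : #[y] != 1%N by rewrite -order_gt1 in nty; rewrite neq_ltn nty orbT.
      apply: (elimT (prime_nt_dvdP p_pr ny1)). by rewrite order_dvdn; move: yp; rewrite inE.
    have eZ : 'Z(G) :=: <[y]>.
      apply/eqP; rewrite eqEcard HZ //= -orderE.
      by rewrite oy; apply: eq_leq; symmetry; exact: oZ.
    by move: (cycle_id y); rewrite -eZ.
  have zO : z \in 'Ohm_1(G).
    by rewrite (OhmE 1 pG) mem_gen // inE Gz expn1 /= inE -oz expg_order.
  apply/eqP; rewrite eqn_leq -{1}oZ subset_leq_card //= -{1}oz orderE subset_leq_card //.
  by rewrite cycle_subG.
have := introT (prime_Ohm1P pG ntG) oOhm.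
case/orP => [cycG | /andP[/eqP p2 /eqP quatG]].
  have [g defG] := cyclicP cycG.
  have Gg : g \in G by rewrite defG cycle_id.
  have ntg : g != 1 by apply: contra ntG => /eqP g1; rewrite defG g1 cycle1.
  have CGg : 'C_G[g] = G.
    apply/setIidPl; rewrite sub_cent1.
    exact: (subsetP (cyclic_abelian cycG)).
  have og : #[g] = p.
    have := HM g Gg ntg; rewrite CGg hM => /eqP.
    by rewrite eqn_pmul2r ?cardG_gt0 // => /eqP.
  have oG : #|G| = p by rewrite defG -orderE og.
  left; exists p => //.
  rewrite isog_cyclic_card // prime_cyclic ?card_Zp ?prime_gt0 // oG eqxx.
  done.
have [n n_gt2 isoG] := (quaternion_classP G).1 quatG.
have [[x y] [oG xG ox _] _] := generators_quaternion n_gt2 isoG.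
have ntx : x != 1.
  by rewrite -order_gt1 ox -{1}(expn0 2) ltn_exp2l //; lia.
have sxC : <[x]> \subset 'C_G[x] by rewrite subsetI !cycle_subG xG cent1id.
have := subset_leq_card sxC; rewrite -orderE => le1.
have := leq_mul (leqnn #[x]) le1; rewrite HM // hM p2 oG ox -!expnS -expnD.
rewrite leq_exp2l // => le2.
have n3 : n = 3 by lia.
subst n; right; exact: isoG.
Qed.

Lemma cdm_cycle (gT : finGroupType) (G : {group gT}) x :
  cdm G <[x]> = (#[x] * #|'C_G[x]|)%N.
Proof. by rewrite /cdm -orderE cent_cycle. Qed.

Theorem corollary1p2 (gT : finGroupType) (G : {group gT}) :
  G :!=: 1 ->
  ((forall H1 H2 : {group gT}, nt_cyclic_sub G H1 -> nt_cyclic_sub G H2 ->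
      cdm G H1 = cdm G H2 /\ cdm G H2 = mstar G)
   \/
   (forall H1 H2 : {group gT}, nt_abelian_sub G H1 -> nt_abelian_sub G H2 ->
      cdm G H1 = cdm G H2)) ->
  (exists2 p : nat, prime p & G \isog Zp p) \/ G \isog 'Q_8.
Proof.
move=> ntG hyp.
have [x0 Gx0 ntx0] := trivgPn _ ntG.
have ntc x : x \in G -> x != 1 ->
    nt_cyclic_sub G <[x]>%G /\ nt_abelian_sub G <[x]>%G.
  move=> Gx ntx; rewrite /nt_cyclic_sub /nt_abelian_sub cycle_subG Gx.
  by rewrite cycle_cyclic cycle_abelian -val_eqE /= cycle_eq1 ntx.
set M := cdm G <[x0]>.
have HM x : x \in G -> x != 1 -> (#[x] * #|'C_G[x]|)%N = M.
  move=> Gx ntx; rewrite -cdm_cycle /M.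
  have [c1 a1] := ntc x Gx ntx; have [c0 a0] := ntc x0 Gx0 ntx0.
  case: hyp => h; first exact: (h _ _ c1 c0).1.
  exact: h.
have HZ x : x \in G -> x != 1 -> 'Z(G) \subset <[x]>.
  move=> Gx ntx.
  set Y := (<[x]> <*> 'Z(G))%G.
  have sGCZ : G \subset 'C('Z(G)) by rewrite centsC subsetIr.
  have sYG : Y \subset G by rewrite join_subG cycle_subG Gx center_sub.
  have cY : 'C_G(Y) = 'C_G[x].
    rewrite /= centY setIC -setIA (setIidPr sGCZ) cent_cycle setIC.
    done.
  have aY : nt_abelian_sub G Y.
    rewrite /nt_abelian_sub sYG abelianY cycle_abelian center_abelian /=.
    rewrite centsC (subset_trans _ sGCZ) ?cycle_subG ?Gx //=.
    rewrite -val_eqE /=; apply: contra ntx => /eqP Y1.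
    by rewrite -cycle_eq1 -subG1 -Y1 joing_subl.
  have [c1 a1] := ntc x Gx ntx.
  have le1 : cdm G Y <= cdm G <[x]>.
    case: hyp => h; last by rewrite (h _ _ aY a1).
    rewrite (h _ _ c1 c1).2 /mstar.
    exact: (leq_bigmax_cond (P := fun H : {group gT} => H \subset G) Y sYG).
  rewrite /cdm cY -orderE cent_cycle in le1.
  rewrite leq_pmul2r ?cardG_gt0 // in le1.
  have eY : <[x]> :=: Y by apply/eqP; rewrite eqEcard joing_subl.
  by rewrite eY joing_subr.
have [p p_pr pG] := key_pgroup HM ntG.
exact: key_class HM HZ ntG p_pr pG.
Qed.
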